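(* Consider the SemiFree Magnetic Tower of Hanoi with $N\ge1$ disks: posts $S$, $D$, $I$, where every disk lying on $S$ must have its Red face up, every disk lying on $D$ must have its Blue face up, and $I$ is initially empty and unconstrained; the $N$ disks start on $S$ (Red face up, decreasing size bottom to top) and must be transferred to $D$. This can be done in $S_{SF}(N)$ moves, where $$S_{SF}(N)=(3^{N-1}+N-1)+\frac{3^{N-1}-1}{8}-\frac{N-1}{2}\quad (N\text{ odd}),\qquad S_{SF}(N)=(3^{N-1}+N-1)+\frac{3^{N-1}-3}{8}-\frac{N-2}{2}\quad (N\text{ even}),$$ by a solution in which disk $k$ (disks numbered $1,\dots,N$ from largest to smallest) moves $$P_{SF}(k)=2\cdot3^{k-2}+\frac{3^{k-1}-9}{8}-\frac{3^{k-2}-3}{8}+1\ (k\text{ odd}),\qquad P_{SF}(k)=2\cdot3^{k-2}+\frac{3^{k-1}-3}{8}-\frac{3^{k-2}-9}{8}\ (k\text{ even})$$ times. Moreover $S_{SF}(N)\big/\tfrac{3^N-1}{2}\to\tfrac34$ as $N\to\infty$.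
   Context: Magnetic Tower of Hanoi rules: there are three posts and disks of distinct diameters, each disk having one Red face and one Blue face. A move consists of lifting the top disk of some post, turning it upside down, and placing it on top of another post. (Size rule) a disk may never be placed on a smaller disk; (Magnet rule) a disk may never be placed so that its downward-facing side has the same color as the upward-facing side of the disk it lands on. In the SemiFree setting the posts $S$ and $D$ are permanently and oppositely colored (as if they sit on top of larger disks showing Red and Blue respectively), so any disk on $S$ must show Red upward and any disk on $D$ must show Blue upward, while the third post $I$ starts empty and neutral and may hold disks in either orientation subject to the rules above. *)

(* Defs.v *)
From HB Require Import structures.
From mathcomp Require Import all_boot all_order all_algebra.
From mathcomp Require Import all_classical all_reals all_analysis.
Set Implicit Arguments. Unset Strict Implicit. Unset Printing Implicit Defensive.
Import Order.TTheory GRing.Theory Num.Theory.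

(* Disks are indexed by 'I_N; the ordinal i stands for disk number i+1 in the
   paper's numbering (1 = largest, N = smallest).  Hence disk i is SMALLER
   than disk j iff j < i (as ordinals). *)

Inductive color := Red | Blue.
Definition color_eqb (a b : color) : bool :=
  match a, b with Red, Red | Blue, Blue => true | _, _ => false end.
Lemma color_eqP : Equality.axiom color_eqb.
Proof. by case; case; constructor. Qed.
HB.instance Definition _ := hasDecEq.Build color color_eqP.

Definition flip (c : color) : color := if c is Red then Blue else Red.

Inductive post := postS | postD | postI.
Definition post_eqb (a b : post) : bool :=
  match a, b with postS, postS | postD, postD | postI, postI => true | _, _ => false end.
Lemma post_eqP : Equality.axiom post_eqb.
Proof. by case; case; constructor. Qed.
HB.instance Definition _ := hasDecEq.Build post post_eqP.

(* The permanent color shown by the base of a post (S: Red, D: Blue);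
   I is neutral. *)
Definition base_color (p : post) : option color :=
  match p with postS => Some Red | postD => Some Blue | postI => None end.

(* A configuration: for each disk, the post it lies on and the color of its
   upward-facing side.  The order of disks on a post is determined by size. *)
Definition config (N : nat) := 'I_N -> post * color.

Definition move (N : nat) := ('I_N * post)%type.

Definition is_top N (s : config N) (p : post) (e : 'I_N) : Prop :=
  (s e).1 = p /\ forall e' : 'I_N, (s e').1 = p -> (e' <= e)%N.

(* Legality of a move: d is the top disk of its post, the destination is a
   different post, every disk on the destination is larger than d (size rule),
   and after turning d upside down, its downward face (= its former upward
   color c) differs from the upward face of what it lands on: the top disk of
   the destination, or the colored base if the destination is empty
   (magnet rule). *)
Definition legal_move N (s : config N) (m : move N) : Prop :=
  let: (d, q) := m in
  let: (p, c) := s d in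
  [/\ is_top s p d,
      q <> p,
      (forall e : 'I_N, (s e).1 = q -> (e < d)%N),
      (forall e : 'I_N, is_top s q e -> (s e).2 <> c) &
      ((forall e : 'I_N, (s e).1 <> q) -> base_color q <> Some c)].

Definition apply_move N (s : config N) (m : move N) : config N :=
  fun e => if e == m.1 then (m.2, flip (s e).2) else s e.

Fixpoint valid_run N (s : config N) (ms : seq (move N)) (t : config N) : Prop :=
  match ms with
  | [::] => forall e, s e = t e
  | m :: ms' => legal_move s m /\ valid_run (apply_move s m) ms' t
  end.

Definition init_config N : config N := fun _ => (postS, Red).
Definition final_config N : config N := fun _ => (postD, Blue).
Arguments init_config : clear implicits.
Arguments final_config : clear implicits.

Local Open Scope ring_scope.

Definition S_SF (N : nat) : rat :=
  let t : rat := 3 ^+ N.-1 in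
  if odd N then (t + N%:R - 1) + (t - 1) / 8 - (N%:R - 1) / 2
  else (t + N%:R - 1) + (t - 3) / 8 - (N%:R - 2) / 2.

(* powers with integer exponent, so that the formula makes sense for k = 1 *)
Definition pow3 (z : int) : rat := (3 : rat) ^ z.

Definition P_SF (k : nat) : rat :=
  if odd k then 2 * pow3 (k%:Z - 2) + (pow3 (k%:Z - 1) - 9) / 8
                 - (pow3 (k%:Z - 2) - 3) / 8 + 1
  else 2 * pow3 (k%:Z - 2) + (pow3 (k%:Z - 1) - 3) / 8
                 - (pow3 (k%:Z - 2) - 9) / 8.

(* Main.v *)
Require Import Defs.
From HB Require Import structures.
From mathcomp Require Import all_boot all_order all_algebra.
From mathcomp Require Import all_classical all_reals all_analysis.
Import Order.TTheory GRing.Theory Num.Theory.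
Import numFieldNormedType.Exports.
From mathcomp Require Import ring lra zify.

Local Close Scope classical_set_scope.
Local Close Scope ring_scope.
Local Open Scope nat_scope.

Local Open Scope nat_scope.

Definition ebase (e : option color) (Q : post) : option color :=
  match Q with postS => Some Red | postD => Some Blue | postI => e end.

Definition refines (a b : option color) : bool := (a == b) || (a == None).

Inductive proc := pA | pX | pY | qB1 | qB2 | qR1 | qR2 | rDI | rID | rDS | rSD.
Inductive step := Rec of proc | Mv of post.

Definition pe (T : proc) : option color :=
  match T with pA | pX | pY => None | qB1 | qB2 => Some Blue | _ => Some Red end.
Definition psrc (T : proc) : post * color :=
  match T with
  | pA | pX => (postS, Red) | pY | qB1 => (postI, Blue) | qB2 => (postD, Blue)
  | qR1 => (postI, Red) | qR2 => (postS, Red) | rDI => (postD, Blue)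
  | rID => (postI, Red) | rDS => (postD, Blue) | rSD => (postS, Red) end.
Definition pdst (T : proc) : post * color :=
  match T with
  | pA | pY | qB1 => (postD, Blue) | pX | qB2 => (postI, Blue)
  | qR1 => (postS, Red) | qR2 => (postI, Red) | rDI => (postI, Red)
  | rID => (postD, Blue) | rDS => (postS, Red) | rSD => (postD, Blue) end.
Definition plan (T : proc) : seq step :=
  match T with
  | pA => [:: Rec pX; Mv postD; Rec pY]
  | pX => [:: Rec pA; Mv postI; Rec qB2]
  | pY => [:: Rec qB1; Mv postS; Rec rDI; Mv postD; Rec rID]
  | qB1 => [:: Rec qB1; Mv postS; Rec qB2; Mv postD; Rec qB1]
  | qB2 => [:: Rec qB2; Mv postS; Rec qB1; Mv postI; Rec qB2]
  | qR1 => [:: Rec qR1; Mv postD; Rec qR2; Mv postS; Rec qR1]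
  | qR2 => [:: Rec qR2; Mv postD; Rec qR1; Mv postI; Rec qR2]
  | rDI => [:: Rec rDS; Mv postI; Rec qR2]
  | rID => [:: Rec qR1; Mv postD; Rec rSD]
  | rDS => [:: Rec rDI; Mv postS; Rec qR1]
  | rSD => [:: Rec qR2; Mv postD; Rec rID]
  end.

Definition lift_ok (e e' : option color) (L : post * color) : bool :=
  all (fun Q => refines (if L.1 == Q then Some L.2 else ebase e Q) (ebase e' Q))
      [:: postS; postD; postI].

Fixpoint simul (e : option color) (L sub : post * color) (ps : seq step)
  : option ((post * color) * (post * color)) :=
  match ps with
  | [::] => Some (L, sub)
  | Rec T' :: ps' =>
      if (sub == psrc T') && lift_ok e (pe T') L then simul e L (pdst T') ps'
      else None
  | Mv Q :: ps' =>
      if [&& Q != L.1, Q != sub.1, L.1 != sub.1 & ebase e Q != Some L.2]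
      then simul e (Q, flip L.2) sub ps' else None
  end.

Definition plan_ok (T : proc) : bool :=
  simul (pe T) (psrc T) (psrc T) (plan T) == Some (pdst T, pdst T).

Lemma all_plan_ok T : plan_ok T.
Proof. by case: T; vm_compute. Qed.

Local Close Scope classical_set_scope.
Local Close Scope ring_scope.
Local Open Scope nat_scope.

Local Open Scope nat_scope.

Fixpoint gen (n : nat) (d : nat) (T : proc) : seq (move n.+1) :=
  match d with
  | 0 => [::]
  | d'.+1 => flatten [seq match st with
                          | Rec T' => gen n d' T'
                          | Mv Q => [:: (inord (n.+1 - d'.+1), Q)] end
                     | st <- plan T]
  end.

Fixpoint topcol n (s : config n.+1) (k : nat) (Q : post) : option color :=
  match k with
  | 0 => base_color Q
  | k'.+1 => if (s (inord k')).1 == Q then Some (s (inord k')).2 else topcol n s k' Q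
  end.
Arguments topcol {n}.

Lemma topcol_ext n (s s' : config n.+1) k Q : k <= n.+1 ->
  (forall j : 'I_n.+1, j < k -> s j = s' j) -> topcol s k Q = topcol s' k Q.
Proof.
elim: k => [//|k IH] hk h /=.
have kin : ((inord k : 'I_n.+1) : nat) = k by rewrite inordK.
rewrite h ?kin // IH //; first exact: ltnW.
by move=> j hj; apply: h; exact: ltnW.
Qed.

Lemma topcol_spec n (s : config n.+1) k Q : k <= n.+1 ->
  ((forall j : 'I_n.+1, j < k -> (s j).1 <> Q) /\ topcol s k Q = base_color Q) \/
  (exists j : 'I_n.+1, [/\ j < k, (s j).1 = Q, topcol s k Q = Some (s j).2 &
       forall j' : 'I_n.+1, j' < k -> (s j').1 = Q -> j' <= j]).
Proof.
elim: k => [_|k IH hk]; first by left; split.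
have hk' : k <= n.+1 by exact: ltnW.
have kin : ((inord k : 'I_n.+1) : nat) = k by rewrite inordK.
rewrite /=; case: eqP => hQ.
  right; exists (inord k); rewrite kin; split => //.
case: (IH hk') => [[h1 h2]|[j [h1 h2 h3 h4]]].
  left; split => // j; rewrite ltnS leq_eqVlt => /orP [/eqP hj|]; last exact: h1.
  have -> : j = inord k by apply: ord_inj; rewrite kin.
  exact: hQ.
right; exists j; split => //; first exact: ltnW.
move=> j'; rewrite ltnS leq_eqVlt => /orP [/eqP hj|]; last exact: h4.
have -> : j' = inord k by apply: ord_inj; rewrite kin.
by move=> /hQ.
Qed.

Lemma big_legal n (s : config n.+1) (k : nat) (P Q p2 : post) (C : color) :
  k < n.+1 -> s (inord k) = (P, C) ->
  (forall j : 'I_n.+1, k < j -> (s j).1 = p2) ->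
  P != p2 -> Q != P -> Q != p2 -> topcol s k Q != Some C ->
  legal_move s (inord k, Q).
Proof.
move=> hk hsk hsub /eqP hPp2 /eqP hQP /eqP hQp2 /eqP htop.
have kin : ((inord k : 'I_n.+1) : nat) = k by rewrite inordK.
have onQ : forall e : 'I_n.+1, (s e).1 = Q -> e < k.
  move=> e he; case: (ltngtP e k) => // h.
    by move: (hsub _ h); rewrite he => /hQp2.
  have ee : e = inord k by apply: ord_inj; rewrite kin.
  by move: he; rewrite ee hsk => /esym /hQP.
rewrite /legal_move hsk; split.
- split; first by rewrite hsk.
  move=> e' he'; rewrite kin; case: (ltnP k e') => // hlt.
  by move: (hsub _ hlt); rewrite he' => /hPp2.
- exact: hQP.
- by move=> e he; rewrite kin; apply: onQ.
- move=> e [he hmax].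
  case: (@topcol_spec n s k Q (ltnW hk)) => [[h1 _]|[j [h1 h2 h3 h4]]].
    by case: (h1 e (onQ e he)).
  have ej : e = j.
    apply: ord_inj; apply/eqP; rewrite eqn_leq (hmax j h2) andbT.
    exact: h4 (onQ e he) he.
  by rewrite ej => hc; apply: htop; rewrite h3 hc.
- move=> hall.
  case: (@topcol_spec n s k Q (ltnW hk)) => [[_ h2]|[j [_ h2 _ _]]].
    by rewrite -h2.
  by case: (hall j).
Qed.

Lemma valid_run_cat n (s u t : config n) a b :
  valid_run s a u -> valid_run u b t -> valid_run s (a ++ b) t.
Proof.
elim: a s => [|m a IH] s /=.
  by move=> hs; have -> : s = u by apply: boolp.funext.
by move=> [hm ha] hb; split => //; apply: IH ha hb.
Qed.

Definition cfg n (s : config n.+1) (k : nat) (L sub : post * color) : config n.+1 :=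
  fun j => if j < k then s j else if (j : nat) == k then L else sub.
Arguments cfg {n}.

Lemma cfg_lift n (s : config n.+1) k L sub X :
  cfg (cfg s k L sub) k.+1 X X = cfg s k L X.
Proof.
apply: boolp.funext => j; rewrite /cfg ltnS leq_eqVlt.
case: (ltngtP j k) => h /=.
- by [] || rewrite orbT.
- by case: ifP.
- by [].
Qed.

Lemma refines_trans a b c : refines a b -> refines b c -> refines a c.
Proof. by rewrite /refines => /orP [/eqP ->|/eqP ->] //; rewrite orbT. Qed.

Lemma refines_neq a b C : refines a b -> b != Some C -> a != Some C.
Proof. by rewrite /refines => /orP [/eqP ->|/eqP ->]. Qed.

Lemma lift_okP e e' L : lift_ok e e' L ->
  forall Q, refines (if L.1 == Q then Some L.2 else ebase e Q) (ebase e' Q).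
Proof. by rewrite /lift_ok /= => /and4P [h1 h2 h3 _] []. Qed.

Lemma gen_valid n d : d <= n.+1 -> forall T (s : config n.+1),
  (forall Q, refines (topcol s (n.+1 - d) Q) (ebase (pe T) Q)) ->
  valid_run (cfg s (n.+1 - d) (psrc T) (psrc T)) (gen n d T)
            (cfg s (n.+1 - d) (pdst T) (pdst T)).
Proof.
elim: d => [_|d IHd hd] T s htop.
  by move=> j; rewrite /cfg subn0 ltn_ord.
set k := n.+1 - d.+1.
have hk : k < n.+1 by rewrite /k; lia.
have hk1 : n.+1 - d = k.+1 by rewrite /k; lia.
have kin : ((inord k : 'I_n.+1) : nat) = k by rewrite inordK.
have key : forall ps L sub L' sub',
  simul (pe T) L sub ps = Some (L', sub') ->
  valid_run (cfg s k L sub)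
    (flatten [seq match st with
                  | Rec T' => gen n d T'
                  | Mv Q => [:: (inord (n.+1 - d.+1), Q)] end | st <- ps])
    (cfg s k L' sub').
  elim=> [|[T'|Q] ps IH] L sub L' sub' /=.
  - by case=> <- <-.
  - case: ifP => // /andP [/eqP hsub hlift] hsim.
    apply: valid_run_cat (IH _ _ _ _ hsim).
    have := IHd (ltnW hd) T' (cfg s k L sub).
    rewrite hk1 !cfg_lift hsub; apply=> Q.
    rewrite /= /cfg kin ltnn eqxx.
    rewrite (@topcol_ext n _ s k Q (ltnW hk)); last by move=> j ->.
    case: eqP (lift_okP _ _ _ hlift Q) => [_|_] h; first exact: h.
    exact: refines_trans (htop Q) h.
  - case: ifP => // /and4P [hQL hQs hLs hb] hsim.
    split; last first.
      have := IH _ _ _ _ hsim.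
      have -> // : apply_move (cfg s k L sub) (inord k, Q) = cfg s k (Q, flip L.2) sub.
      apply: boolp.funext => j; rewrite /apply_move /cfg /=.
      case: (ltngtP j k) => h.
      + have : j != inord k by apply/eqP => ee; move: h; rewrite ee kin ltnn.
        by move/negbTE ->.
      + have : j != inord k by apply/eqP => ee; move: h; rewrite ee kin ltnn.
        by move/negbTE ->.
      + have -> : j = inord k by apply: ord_inj; rewrite kin.
        by rewrite eqxx.
    case: L hQL hLs hb {hsim} => P C /= hQL hLs hb.
    apply: (@big_legal n _ k P Q sub.1 C) => //.
    + by rewrite /cfg kin ltnn eqxx.
    + by move=> j hj; rewrite /cfg (ltnNge j k) (ltnW hj) /= (gtn_eqF hj).
    + rewrite (@topcol_ext n _ s k Q (ltnW hk)); last by move=> j hj; rewrite /cfg hj.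
      exact: refines_neq (htop Q) hb.
have := all_plan_ok T; rewrite /plan_ok => /eqP hs.
exact: key _ _ _ _ _ hs.
Qed.

Local Close Scope classical_set_scope.
Local Close Scope ring_scope.
Local Open Scope nat_scope.

Local Open Scope nat_scope.

Definition isMv (st : step) : bool := if st is Mv _ then true else false.

Fixpoint cnt (i : nat) (T : proc) : nat :=
  match i with
  | 0 => count isMv (plan T)
  | i'.+1 => sumn [seq (if st is Rec T' then cnt i' T' else 0) | st <- plan T]
  end.

Lemma gen_count n d : d <= n.+1 -> forall T (j : 'I_n.+1),
  count (fun m : move n.+1 => m.1 == j) (gen n d T) =
  if n.+1 - d <= j then cnt (j - (n.+1 - d)) T else 0.
Proof.
elim: d => [_|d IHd hd] T j.
  by rewrite subn0 leqNgt ltn_ord.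
set k := n.+1 - d.+1.
have hk : k < n.+1 by rewrite /k; lia.
have hk1 : n.+1 - d = k.+1 by rewrite /k; lia.
have kin : ((inord k : 'I_n.+1) : nat) = k by rewrite inordK.
have key : forall ps,
  count (fun m : move n.+1 => m.1 == j)
    (flatten [seq match st with
                  | Rec T' => gen n d T'
                  | Mv Q => [:: (inord (n.+1 - d.+1), Q)] end | st <- ps]) =
  if k <= j then (if (j : nat) == k then count isMv ps
                  else sumn [seq (if st is Rec T' then cnt (j - k.+1) T' else 0) | st <- ps])
  else 0.
  elim=> [|[T'|Q] ps IH] /=.
  - by case: ifP => //; case: ifP.
  - rewrite count_cat IH IHd ?(ltnW hd) // hk1.
    case: (ltngtP j k) => h //=.
  - rewrite IH; rewrite -/k.
    have -> : ((inord k : 'I_n.+1) == j) = ((j : nat) == k).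
      by apply/eqP/eqP => [<-|hj]; [exact: kin | apply: ord_inj; rewrite kin hj].
    case: (ltngtP j k) => h //=.
rewrite /= key.
case: (ltngtP j k) => h //=.
- by have -> : j - k = (j - k.+1).+1 by lia.
- by rewrite h subnn.
Qed.

Local Close Scope classical_set_scope.
Local Close Scope ring_scope.
Local Open Scope nat_scope.
Local Open Scope ring_scope.

Lemma pow3E2 (m : nat) : pow3 (m%:Z - 2) = 3 ^+ m / 9.
Proof. by rewrite /pow3 expfzDr // -exprnP. Qed.
Lemma pow3E1 (m : nat) : pow3 (m%:Z - 1) = 3 ^+ m / 3.
Proof. by rewrite /pow3 expfzDr // -exprnP. Qed.

Definition eps (i : nat) : nat := if odd i then 3 else 1.

Lemma P_SF_E (k : nat) : P_SF k.+1 = ((3 ^+ k.+1 + (eps k)%:R) / 4 : rat).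
Proof.
rewrite /P_SF /eps pow3E2 pow3E1 /=.
by case: (odd k) => /=; field.
Qed.

Lemma S_SF_step (n : nat) :
  S_SF n.+2 = S_SF n.+1 + (3 ^+ n.+2 + (eps n.+1)%:R) / 4.
Proof.
rewrite /S_SF /eps /=. rewrite !exprS.
by case: (odd n) => /=; rewrite -!natr1; field.
Qed.

Local Close Scope classical_set_scope.
Local Close Scope ring_scope.
Local Open Scope nat_scope.

Local Open Scope nat_scope.

Lemma cnt_dbl i : [/\ cnt i qB1 = 2 * 3 ^ i, cnt i qB2 = 2 * 3 ^ i,
                     cnt i qR1 = 2 * 3 ^ i & cnt i qR2 = 2 * 3 ^ i].
Proof.
elim: i => [|i [h1 h2 h3 h4]] //=.
by rewrite h1 h2 h3 h4 expnS; split; lia.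
Qed.

Lemma cnt_sgl i : [/\ cnt i rDI = 3 ^ i, cnt i rID = 3 ^ i,
                     cnt i rDS = 3 ^ i & cnt i rSD = 3 ^ i].
Proof.
elim: i => [|i [h1 h2 h3 h4]] //=.
case: (cnt_dbl i) => d1 d2 d3 d4.
by rewrite h1 h2 h3 h4 d3 d4 expnS; split; lia.
Qed.

Lemma cnt_a2 i : cnt i.+2 pA = cnt i pA + 6 * 3 ^ i.
Proof.
rewrite /=.
case: (cnt_dbl i) => d1 d2 d3 d4; case: (cnt_sgl i) => s1 s2 s3 s4.
rewrite d1 d2 s1 s2; lia.
Qed.

Lemma cnt_a i : 4 * cnt i pA = 3 ^ i.+1 + eps i.
Proof.
suff : 4 * cnt i pA = 3 ^ i.+1 + eps i /\ 4 * cnt i.+1 pA = 3 ^ i.+2 + eps i.+1 by case.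
elim: i => [|i [h0 h]]; first by [].
split => //.
rewrite cnt_a2 mulnDr.
have e : eps i.+2 = eps i by rewrite /eps /= negbK.
rewrite e h0 !expnS; lia.
Qed.

Local Open Scope ring_scope.

Lemma cnt_aR i : (cnt i pA)%:R = ((3 ^+ i.+1 + (eps i)%:R) / 4 : rat).
Proof.
have h := cnt_a i.
have : (4 * cnt i pA)%:R = ((3 ^ i.+1 + eps i)%N%:R : rat) by rewrite h.
rewrite natrM natrD natrX => h'.
have -> : (cnt i pA)%:R = (4 * (cnt i pA)%:R) / 4 :> rat by field.
rewrite h'.
by [].
Qed.

Lemma sum_aR n : (\sum_(j < n.+1) cnt j pA)%:R = S_SF n.+1.
Proof.
elim: n => [|n IH]; first by rewrite big_ord1.
by rewrite big_ord_recr natrD IH S_SF_step -(cnt_aR n.+1).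
Qed.

Local Close Scope classical_set_scope.
Local Close Scope ring_scope.
Local Open Scope nat_scope.

Lemma size_count N (ms : seq (move N)) :
  size ms = (\sum_(j < N) count (fun m : move N => m.1 == j) ms)%N.
Proof.
elim: ms => [|m ms IH]; first by rewrite big1.
rewrite /= IH big_split /= -add1n; congr (_ + _); rewrite (bigD1 m.1) //= eqxx big1 // => j hj.
by rewrite eq_sym (negbTE hj).
Qed.

Local Open Scope ring_scope.

Lemma comb (N : nat) : (1 <= N)%N ->
     exists ms : seq (move N),
       [/\ valid_run (init_config N) ms (final_config N),
           (size ms)%:R = S_SF N &
           forall k : 'I_N,
             (count (fun m : move N => m.1 == k) ms)%:R = P_SF k.+1].
Proof.
case: N => [//|n] _.
have hc : forall k : 'I_n.+1, count (fun m : move n.+1 => m.1 == k) (gen n n.+1 pA) = cnt k pA.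
  by move=> k; rewrite gen_count // subnn subn0.
exists (gen n n.+1 pA); split.
- have := @gen_valid n n.+1 (leqnn _) pA (init_config n.+1).
  rewrite subnn.
  have -> : cfg (init_config n.+1) 0 (psrc pA) (psrc pA) = init_config n.+1.
    by apply: boolp.funext => j; rewrite /cfg /=; case: ifP.
  have -> : cfg (init_config n.+1) 0 (pdst pA) (pdst pA) = final_config n.+1.
    by apply: boolp.funext => j; rewrite /cfg /=; case: ifP.
  by apply; case.
- rewrite size_count (eq_bigr _ (fun k _ => hc k)).
  rewrite -sum_aR.
  by [].
- by move=> k; rewrite hc cnt_aR P_SF_E.
Qed.

Local Close Scope classical_set_scope.
Local Close Scope ring_scope.
Local Open Scope nat_scope.
Local Open Scope classical_set_scope.
Local Open Scope ring_scope.

Lemma pow_bound (m : nat) : (m.+1 * m.+2 + 1 <= 3 ^ m.+1)%N.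
Proof.
elim: m => [//|m IH].
rewrite expnS; nia.
Qed.

Lemma err_bound (m : nat) :
  0 <= S_SF m.+1 / ((3 ^+ m.+1 - 1) / 2) - 3 / 4 <= (m.+2%:R)^-1.
Proof.
have hb : ((m.+1 * m.+2 + 1)%N%:R : rat) <= 3 ^+ m.+1.
  by rewrite -natrX ler_nat pow_bound.
move: hb; rewrite exprS /S_SF /=.
set u : rat := 3 ^+ m.
rewrite natrD natrM -!natr1 => hb.
have hm : 0 <= (m%:R : rat) by [].
have hden : 0 < 3 * u - 1 by nra.
have -> : ((if ~~ odd m
   then u + (m%:R + 1) - 1 + (u - 1) / 8 - (m%:R + 1 - 1) / 2
   else u + (m%:R + 1) - 1 + (u - 3) / 8 - (m%:R + 1 - 2) / 2) /
  ((3 * u - 1) / 2) - 3 / 4) =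
  (if ~~ odd m then m%:R + 1/2 else m%:R + 1) / (3 * u - 1).
  by case: (odd m) => /=; field; exact: lt0r_neq0.
have hp : 0 < (m%:R + 1 + 1 : rat) by lra.
apply/andP; split.
  by apply: divr_ge0; [case: (odd m) => /=; lra | lra].
rewrite ler_pdivrMr // ler_pdivlMl //.
by case: (odd m) => /=; nra.
Qed.

Lemma lim_part (R : realType) :
  ((fun N : nat => (ratr (S_SF N) : R) / ratr (((3 : rat) ^+ N - 1) / 2))
     @ \oo --> (3 / 4 : R)).
Proof.
apply/cvgrPdist_le => eps heps.
near=> N.
have hN : (1 <= N)%N by near: N; exact: nbhs_infty_ge.
have he : N.+1%:R^-1 < eps by near: N; exact: (near_infty_natSinv_lt (PosNum heps)).
move: he; rewrite (_ : N = N.-1.+1); last by rewrite prednK.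
move: N.-1 => m he.
have := err_bound m; set q := S_SF m.+1 / _; move=> /andP [h0 h1].
have -> : (ratr (S_SF m.+1) : R) / ratr ((3 ^+ m.+1 - 1) / 2) = ratr q.
  by rewrite -fmorph_div.
have e34 : (3 / 4 : R) = ratr (3 / 4) by rewrite fmorph_div !rmorph_nat.
have em : (m.+2%:R^-1 : R) = ratr (m.+2%:R^-1) by rewrite fmorphV rmorph_nat.
rewrite ler_norml; apply/andP; split.
- rewrite lerNl opprB e34 -rmorphB.
  apply: le_trans (ltW he); rewrite em ler_rat //.
- rewrite e34 -rmorphB; apply: le_trans (ltW heps).
  rewrite -(rmorph0 ratr) ler_rat. lra.
Unshelve. all: by end_near.
Qed.


Local Open Scope classical_set_scope.
Local Open Scope ring_scope.

Theorem mainTheorem3 (R : realType) :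
  (forall N : nat, (1 <= N)%N ->
     exists ms : seq (move N),
       [/\ valid_run (init_config N) ms (final_config N),
           (size ms)%:R = S_SF N &
           forall k : 'I_N,
             (count (fun m : move N => m.1 == k) ms)%:R = P_SF k.+1]) /\
  ((fun N : nat => (ratr (S_SF N) : R) / ratr (((3 : rat) ^+ N - 1) / 2))
     @ \oo --> (3 / 4 : R)).
Proof.
split; [exact: comb | exact: lim_part].
Qed.
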